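(* For every base $b\ge 2$ there exist infinitely many $b$-wARH numbers that are not $b$-Niven numbers.
   Context: Fix a base $b\ge 2$. $s_b(N)$ is the sum of the base-$b$ digits of $N$. For a positive integer $X$, its reversal $X^R$ is the integer whose base-$b$ representation is that of $X$ written in reverse order (leading zeros of the result are dropped). A positive integer $N$ is a $b$-wARH number if there exists an integer $A\ge 0$ such that $N=(A+s_b(N))+(A+s_b(N))^R$. A positive integer $N$ is a $b$-Niven number if $s_b(N)$ divides $N$. *)

(* Defs.v *)
From mathcomp Require Import all_boot.
Set Implicit Arguments. Unset Strict Implicit. Unset Printing Implicit Defensive.

(* Base-b digits of n, least significant first; uses fuel (n suffices for b >= 2). *)
Fixpoint digits_fuel (fuel b n : nat) : seq nat :=
  match fuel with
  | 0 => [::]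
  | f.+1 => if n == 0 then [::] else (n %% b) :: digits_fuel f b (n %/ b)
  end.

Definition digits (b n : nat) : seq nat := digits_fuel n b n.

Definition fromdigits (b : nat) (s : seq nat) : nat :=
  foldr (fun d acc => d + b * acc) 0 s.

Definition sdig (b n : nat) : nat := sumn (digits b n).

(* X^R : reverse the base-b representation (leading zeros of the result vanish) *)
Definition rev_num (b x : nat) : nat := fromdigits b (rev (digits b x)).

Definition wARH (b N : nat) : Prop :=
  0 < N /\ exists A : nat, N = (A + sdig b N) + rev_num b (A + sdig b N).

Definition Niven (b N : nat) : Prop := 0 < N /\ sdig b N %| N.

(* Main.v *)
Require Import Defs.
From mathcomp Require Import all_boot.
From mathcomp Require Import zify.

Section S.
Variable b : nat.
Hypothesis hb : 2 <= b.

Lemma fuel_eq f : forall g n, n <= f -> n <= g -> digits_fuel f b n = digits_fuel g b n.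
Proof.
elim: f => [|f IH] [|g] n /= hf hg //.
- by have -> : n = 0 by lia.
- by have -> : n = 0 by lia.
- case: eqP => // /eqP n0; congr (_ :: _); apply: IH.
  + have := ltn_Pdiv hb (_ : 0 < n); lia.
  + have := ltn_Pdiv hb (_ : 0 < n); lia.
Qed.

Lemma digitsE n : digits b n = if n == 0 then [::] else n %% b :: digits b (n %/ b).
Proof.
rewrite /digits; case: n => [|n] //=.
congr (_ :: _); apply: fuel_eq => //.
have := ltn_Pdiv hb (ltn0Sn n); lia.
Qed.

Definition canon (s : seq nat) := all (fun d => d < b) s && (last 1 s != 0).

Lemma canon_pos s : s != [::] -> canon s -> 0 < fromdigits b s.
Proof.
elim: s => [|d t IH] //= _ /andP [/andP [hd ht] hl].
case: t IH ht hl => [|e t] IH ht hl /=.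
- move: hl => /=; lia.
- have : 0 < fromdigits b (e :: t) by apply: IH => //; apply/andP.
  move=> /= h; nia.
Qed.

Lemma digits_from s : canon s -> digits b (fromdigits b s) = s.
Proof.
elim: s => [|d t IH] /=; first by rewrite digitsE.
move=> hc; have hp : 0 < d + b * fromdigits b t by have := canon_pos (d::t) isT hc.
move: hc => /andP [/andP [hd ht] hl].
rewrite digitsE; have -> : (d + b * fromdigits b t == 0) = false by lia.
have e1 : (d + b * fromdigits b t) %% b = d.
  by rewrite addnC mulnC modnMDl modn_small.
have e2 : (d + b * fromdigits b t) %/ b = fromdigits b t.
  rewrite addnC mulnC divnMDl ?divn_small ?addn0 //; lia.
rewrite e1 e2 IH //.
case: t IH ht hl {e1 e2 hp} => [|e t] _ ht hl //.
by apply/andP.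
Qed.

Lemma fromdigits_cat s t : fromdigits b (s ++ t) = fromdigits b s + b ^ size s * fromdigits b t.
Proof.
elim: s => [|d s IH] /=; first by rewrite expn0 mul1n.
rewrite IH expnS; lia.
Qed.

End S.

Lemma sdig_from b s : 2 <= b -> canon b s -> sdig b (fromdigits b s) = sumn s.
Proof. by move=> hb hc; rewrite /sdig digits_from. Qed.

Lemma rev_from b s : 2 <= b -> canon b s -> rev_num b (fromdigits b s) = fromdigits b (rev s).
Proof. by move=> hb hc; rewrite /rev_num digits_from. Qed.

Lemma from_nseq b m c : fromdigits b (nseq m c) = c * fromdigits b (nseq m 1).
Proof. elim: m => [|m IH] /=; [lia | rewrite IH; lia]. Qed.

Lemma from_nseq0 b m : fromdigits b (nseq m 0) = 0.
Proof. by rewrite from_nseq. Qed.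

Lemma rep_ge b m : 3 <= b -> 1 < m -> 2 * m <= fromdigits b (nseq m 1).
Proof.
move=> hb; case: m => [|[|m]] // _.
elim: m => [|m IH] /=; first lia.
move: IH => /= IH; nia.
Qed.

Lemma rep_mod b m : 2 <= b -> 0 < m -> fromdigits b (nseq m 1) %% b = 1.
Proof.
move=> hb; case: m => [|m] //= _.
by rewrite addnC mulnC modnMDl modn_small.
Qed.

Lemma sumn_nseq' m c : sumn (nseq m c) = c * m.
Proof. elim: m => [|m IH] /=; lia. Qed.

Lemma last_nseq' (c : nat) n : last c (nseq n c) = c.
Proof. by elim: n. Qed.

Theorem corollary8 (b : nat) (hb : 2 <= b) :
  forall M : nat, exists N : nat, M < N /\ wARH b N /\ ~ Niven b N.
Proof.
move=> M.
case: (ltngtP b 2) => hb2; first lia.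
-
  set m := b ^ M.+1.
  have hm : M < m by rewrite /m; have := ltn_expl M.+1 hb; lia.
  have hm1 : 1 < m by rewrite /m expnS; have := expn_gt0 b M; nia.
  set R := fromdigits b (nseq m 1).
  have hR := @rep_ge b m hb2 hm1.
  have c1 : canon b (nseq m 1).
    apply/andP; split; first by apply/allP => x /nseqP [-> _]; lia.
    by case: (m) hm1 => [|n] //= _; rewrite last_nseq'.
  have c2 : canon b (nseq m 2).
    apply/andP; split; first by apply/allP => x /nseqP [-> _]; lia.
    by case: (m) hm1 => [|n] //= _; rewrite last_nseq'.
  have sN : sdig b (fromdigits b (nseq m 2)) = 2 * m by rewrite sdig_from // sumn_nseq'.
  exists (fromdigits b (nseq m 2)); rewrite from_nseq -/R in sN *.
  split; first lia.
  split.
  + split; first lia.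
    exists (R - 2 * m); rewrite sN subnK // /R rev_from // rev_nseq -/R; lia.
  + move=> [_]; rewrite sN => hd.
    have hmR : m %| R by move: hd; rewrite dvdn_pmul2l.
    have hbR : b %| R by apply: dvdn_trans hmR; rewrite /m expnS dvdn_mulr.
    move: hbR; rewrite /dvdn rep_mod //; lia.
-
  subst b.
  set s := 1 :: (nseq M 0 ++ [:: 1]).
  have cs : canon 2 s.
    apply/andP; split; first by rewrite /s /= all_cat all_nseq /= orbT.
    by rewrite /s /= last_cat.
  have hv : fromdigits 2 s = 1 + 2 ^ M.+1.
    have -> : fromdigits 2 s = 1 + 2 * fromdigits 2 (nseq M 0 ++ [::1]) by [].
    rewrite fromdigits_cat // from_nseq0 size_nseq /= expnS; lia.
  have hsum : sdig 2 (fromdigits 2 s) = 2.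
    by rewrite sdig_from // /s /= sumn_cat sumn_nseq' /=; lia.
  set t := nseq M.+1 0 ++ [:: 1].
  have ct : canon 2 t.
    apply/andP; split; first by rewrite /t all_cat all_nseq /=.
    by rewrite /t last_cat.
  have ht : fromdigits 2 t = 2 ^ M.+1 by rewrite /t fromdigits_cat // from_nseq0 size_nseq /=; lia.
  have hrt : rev_num 2 (fromdigits 2 t) = 1.
    by rewrite rev_from // /t rev_cat rev_nseq /= from_nseq0.
  have he : 2 <= 2 ^ M.+1 by rewrite expnS; have := expn_gt0 2 M; lia.
  exists (fromdigits 2 s).
  split; first by rewrite hv; have := ltn_expl M.+1 (isT : 1 < 2); lia.
  split.
  + split; first by rewrite hv; lia.
    exists (2 ^ M.+1 - 2); rewrite hsum subnK // -ht hrt hv ht; lia.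
  + move=> [_]; rewrite hsum hv expnS => hd.
    move: hd; rewrite /dvdn; lia.
Qed.
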